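(* Let $\mathcal{C}$ be a covering of a finite set $E$ and let $SH(X)=\bigcup\{K\in\mathcal{C}:K\cap X\neq\emptyset\}$ for $X\subseteq E$. Then $\mathcal{C}$ satisfies the condition (TRA): for all $x,y,z\in E$, if there are $K_1,K_2\in\mathcal{C}$ with $x,z\in K_1$ and $y,z\in K_2$, then there exists $K_3\in\mathcal{C}$ with $x,y\in K_3$; if and only if $SH$ is the closure operator of some matroid on $E$.
   Context: A covering of $E$ is a family of nonempty subsets of $E$ with union $E$. The closure operator of a matroid with rank function $r$ is $cl(X)=\{a\in E:r(X\cup\{a\})=r(X)\}$. *)

(* Defs.v *)
From mathcomp Require Import all_boot.
Set Implicit Arguments. Unset Strict Implicit. Unset Printing Implicit Defensive.

(* The finite ground set E is modelled as a finType T (E = [set: T]). *)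

Definition matroid_rank (T : finType) (r : {set T} -> nat) : Prop :=
  [/\ forall X : {set T}, r X <= #|X|,
      forall X Y : {set T}, X \subset Y -> r X <= r Y
    & forall X Y : {set T}, r (X :|: Y) + r (X :&: Y) <= r X + r Y].

Definition mcl (T : finType) (r : {set T} -> nat) (X : {set T}) : {set T} :=
  [set a | r (a |: X) == r X].

Definition covering (T : finType) (C : {set {set T}}) : Prop :=
  (forall K, K \in C -> K != set0) /\ \bigcup_(K in C) K = [set: T].

Definition SH (T : finType) (C : {set {set T}}) (X : {set T}) : {set T} :=
  \bigcup_(K in C | K :&: X != set0) K.

Definition TRA (T : finType) (C : {set {set T}}) : Prop :=
  forall x y z : T,
    (exists K1, [/\ K1 \in C, x \in K1 & z \in K1]) ->
    (exists K2, [/\ K2 \in C, y \in K2 & z \in K2]) ->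
    exists K3, [/\ K3 \in C, x \in K3 & y \in K3].

(* Main.v *)
Require Import Defs.
From mathcomp Require Import all_boot.
From mathcomp Require Import zify.

Lemma meet1 (T : finType) (K : {set T}) x : (K :&: [set x] != set0) = (x \in K).
Proof.
apply/set0Pn/idP => [[y]|Hx].
  by rewrite !inE => /andP[Hy /eqP E]; rewrite -E.
by exists x; rewrite !inE Hx eqxx.
Qed.

Theorem theorem9 (T : finType) (C : {set {set T}}) :
  covering C ->
  (TRA C <-> exists r : {set T} -> nat, matroid_rank r /\ forall X : {set T}, SH C X = mcl r X).
Proof.
move=> [Cne Ccov]; split.
- move=> Htra.
  pose rel (x y : T) := [exists K in C, (x \in K) && (y \in K)].
  have relP x y : reflect (exists K, [/\ K \in C, x \in K & y \in K]) (rel x y).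
    apply: (iffP existsP) => [[K /andP[HK /andP[Hx Hy]]]|[K [HK Hx Hy]]].
      by exists K.
    by exists K; rewrite HK Hx Hy.
  have relxx x : rel x x.
    have : x \in \bigcup_(K in C) K by rewrite Ccov inE.
    by case/bigcupP => K HK Hx; apply/relP; exists K.
  have relC x y : rel x y -> rel y x.
    by move/relP=> [K [HK Hx Hy]]; apply/relP; exists K.
  have relT x z y : rel x z -> rel z y -> rel x y.
    move/relP=> [K1 [H1 Hx Hz]] /relP [K2 [H2 Hz' Hy]]; apply/relP.
    apply: (Htra x y z); first by exists K1.
    by exists K2.
  pose cls x := [set y | rel x y].
  have clsE a x : (cls a == cls x) = rel a x.
    apply/eqP/idP => [E|Hax].
      have : x \in cls a by rewrite E inE relxx.
      by rewrite inE.
    apply/setP=> y; rewrite !inE; apply/idP/idP => H.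
      exact: relT (relC _ _ Hax) H.
    exact: relT Hax H.
  exists (fun X : {set T} => #|cls @: X|); split.
    split.
    + by move=> X; apply: leq_imset_card.
    + by move=> X Y HXY; apply/subset_leq_card/imsetS.
    + move=> X Y; rewrite imsetU -(cardsUI (cls @: X) (cls @: Y)) leq_add2l.
      by apply/subset_leq_card; rewrite subsetI !imsetS ?subsetIl ?subsetIr.
  move=> X; apply/setP=> a; rewrite /mcl inE imsetU1 cardsU1.
  have -> : (a \in SH C X) = (cls a \in cls @: X).
    apply/bigcupP/imsetP => [[K /andP[HK HKX] HaK]|[x Hx /eqP]].
      case/set0Pn: HKX => x; rewrite inE => /andP[HxK HxX].
      exists x => //; apply/eqP; rewrite clsE; apply/relP; by exists K.
    rewrite clsE => /relP [K [HK HaK HxK]].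
    exists K => //; rewrite HK /=; apply/set0Pn; exists x; by rewrite inE HxK.
  by case: (cls a \in cls @: X); rewrite /= ?add0n ?add1n ?eqxx // eqn_leq ltnn.
- move=> [r [[Hr1 Hr2 Hr3] HSH]] x y z [K1 [H1 Hx1 Hz1]] [K2 [H2 Hy2 Hz2]].
  have memSH a b K : K \in C -> a \in K -> b \in K -> a \in SH C [set b].
    move=> HK Ha Hb; apply/bigcupP; exists K => //; by rewrite HK meet1.
  have Hzx := memSH _ _ _ H1 Hz1 Hx1.
  have Hyz := memSH _ _ _ H2 Hy2 Hz2.
  rewrite HSH /mcl inE in Hzx; rewrite HSH /mcl inE in Hyz.
  move/eqP: Hzx => Hzx; move/eqP: Hyz => Hyz.
  have Hyx : y \in SH C [set x].
    rewrite HSH /mcl inE; apply/eqP.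
    set X := z |: [set x]; set Y := y |: [set z].
    have h1 := Hr3 X Y.
    have h2 : r [set z] <= r (X :&: Y).
      by apply: Hr2; rewrite sub1set !inE !eqxx /= orbT.
    have h3 : r (y |: [set x]) <= r (X :|: Y).
      by apply: Hr2; apply/subsetP=> w; rewrite !inE => /orP[]->; rewrite ?orbT.
    have h4 : r [set x] <= r (y |: [set x]) by apply: Hr2; apply: subsetUr.
    rewrite /X /Y in h1 h2 h3; lia.
  case/bigcupP: Hyx => K /andP[HK]; rewrite meet1 => HxK HyK.
  by exists K.
Qed.
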